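(* Let $p$ be an odd prime, $a\ge1$ an integer, and $N$ a positive integer with $p\mid N$. Then \[ \sum_{b=0}^{a}\binom{a}{b}F_a^{(b)}(\emptyset,2N,p)=\frac{N}{a+1}\,Z_{a+1}(N,p). \]
   Context: For a prime $p$, $\mathcal P_p$ is the set of positive integers not divisible by $p$. $Z_n(N,p):=\sum\frac{1}{l_1\cdots l_n}$ over $(l_1,\dots,l_n)\in\mathcal P_p^n$ with $l_1+\dots+l_n=N$ (for $p\mid N$). Write $\bar1$ for a formal ''signed $1$'', $\varepsilon(1)=1$, $\varepsilon(\bar1)=-1$. For integers $a\ge b\ge0$, $d\ge0$, $\mathbf s=(s_1,\dots,s_d)\in\{1,\bar1\}^d$, and $M$ with $p\mid M$, \[F_a^{(b)}(\mathbf s,M,p):=\sum\frac{\varepsilon(s_1)^{i_1}\cdots\varepsilon(s_d)^{i_d}(-1)^{l_1+\dots+l_b}}{i_1\cdots i_d\,l_1\cdots l_a},\] the sum over integers $i_1,\dots,i_d$ and $l_1,\dots,l_a\in\mathcal P_p$ with $M>i_1>\dots>i_d>l_1+\dots+l_a$ and $M-i_1,\ i_1-i_2,\dots,i_{d-1}-i_d,\ i_d-(l_1+\dots+l_a)\in\mathcal P_p$ (when $d=0$ the conditions read $M>l_1+\dots+l_a$ and $M-(l_1+\dots+l_a)\in\mathcal P_p$). $\emptyset$ is the empty tuple. *)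

(* Defs.v *)
From HB Require Import structures.
From mathcomp Require Import all_boot all_order all_algebra.
Set Implicit Arguments. Unset Strict Implicit. Unset Printing Implicit Defensive.
Import Order.TTheory GRing.Theory Num.Theory.
Local Open Scope ring_scope.

(* Signed ones: a sign is encoded by a bool, [false] = 1, [true] = \bar1. *)
Definition eps (s : bool) : rat := if s then -1 else 1.

(* Membership in P_p: positive integer not divisible by p.
   (For prime p, ~~ (p %| n) already forces n > 0, but we state both.) *)
Definition inPp (p n : nat) : bool := (0 < n)%N && ~~ (p %| n)%N.

(* Z_n(N,p) = sum over (l_1..l_n) in P_p^n with l_1+..+l_n = N of 1/(l_1...l_n).
   Each l_k <= N, so l_k ranges over 'I_N.+1. *)
Definition Zsum (n N p : nat) : rat :=
  \sum_(l : {ffun 'I_n -> 'I_N.+1})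
     if [forall k, inPp p (l k)] && ((\sum_(k < n) (l k : nat))%N == N)
     then (\prod_(k < n) ((l k : nat)%:R : rat))^-1 else 0.

(* Indices i_1..i_d and l_1..l_a are all < M, hence range over 'I_M.
   The chain condition M > i_1 > ... > i_d > L (L = l_1+..+l_a) with all
   consecutive differences in P_p is expressed as a path. *)
Definition chain_ok (p : nat) : rel nat :=
  fun x y => (y < x)%N && inPp p (x - y).

Definition Fsum (a b : nat) (s : seq bool) (M p : nat) : rat :=
  \sum_(i : {ffun 'I_(size s) -> 'I_M})
  \sum_(l : {ffun 'I_a -> 'I_M})
     let L := (\sum_(k < a) (l k : nat))%N in
     if [forall k, inPp p (l k)] &&
        path (chain_ok p) M ([seq (i j : nat) | j <- enum 'I_(size s)] ++ [:: L])
     then (\prod_(j < size s) eps (nth false s j) ^+ (i j : nat))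
          * (-1) ^+ (\sum_(k < a | (k < b)%N) (l k : nat))%N
          / ((\prod_(j < size s) ((i j : nat)%:R : rat))
             * (\prod_(k < a) ((l k : nat)%:R : rat)))
     else 0.

(* Main.v *)
Require Import Defs.
From HB Require Import structures.
From mathcomp Require Import all_boot all_order all_algebra all_fingroup zify.
Import Order.TTheory GRing.Theory Num.Theory.
Local Open Scope ring_scope.
Set Implicit Arguments. Unset Strict Implicit.

Lemma sum_ffun_perm n (T : finType) (s : {perm 'I_n}) (F : {ffun 'I_n -> T} -> rat) :
  \sum_(m : {ffun 'I_n -> T}) F m = \sum_(m : {ffun 'I_n -> T}) F [ffun k => m (s k)].
Proof.
apply: (reindex_inj (h := fun m : {ffun 'I_n -> T} => [ffun k => m (s k)])).
move=> m1 m2 /ffunP H; apply/ffunP => k.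
by have := H (s^-1 k)%g; rewrite !ffunE permKV.
Qed.

Lemma sum_perm_nat n (s : {perm 'I_n}) (f : 'I_n -> nat) :
  (\sum_k f (s k) = \sum_k f k)%N.
Proof. by rewrite [RHS](reindex_inj (@perm_inj _ s)). Qed.

Lemma prod_perm_rat n (s : {perm 'I_n}) (f : 'I_n -> rat) :
  \prod_k f (s k) = \prod_k f k.
Proof. by rewrite [RHS](reindex_inj (@perm_inj _ s)). Qed.

Lemma forall_perm n (s : {perm 'I_n}) (P : pred 'I_n) :
  [forall k, P (s k)] = [forall k, P k].
Proof.
apply/forallP/forallP => H k; last exact: H.
by have := H (s^-1 k)%g; rewrite permKV.
Qed.

Lemma exists_perm_set n (S : {set 'I_n}) :
  exists s : {perm 'I_n}, forall k, (s k \in S) = (k < #|S|)%N.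
Proof.
set sq := enum S ++ enum (~: S).
have Hsz : size sq = n by rewrite size_cat -!cardE cardsC card_ord.
have Hu : uniq sq.
  rewrite cat_uniq !enum_uniq /= andbT; apply/hasPn => x.
  by rewrite !mem_enum inE => ->.
have inj : injective (fun k : 'I_n => nth k sq k).
  move=> i j /eqP; rewrite (set_nth_default i j) ?Hsz // nth_uniq ?Hsz //.
  by move=> /eqP /val_inj.
exists (perm inj) => k; rewrite permE /sq nth_cat -cardE.
case: ltnP => Hk.
  by rewrite -(mem_enum (mem S)) mem_nth // -cardE.
have : nth k (enum (~: S)) (k - #|S|) \in enum (~: S).
  apply: mem_nth; rewrite -cardE ltn_subLR // cardsC card_ord //.
by rewrite mem_enum inE => /negbTE.
Qed.

Lemma prod_1D n (x : 'I_n -> rat) :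
  \prod_k (1 + x k) = \sum_(S : {set 'I_n}) \prod_(k in S) x k.
Proof.
transitivity (\prod_k \sum_(b : bool) (if b then x k else 1)).
  by apply: eq_bigr => k _; rewrite big_bool /= addrC.
rewrite bigA_distr_bigA /=.
rewrite (reindex (fun S : {set 'I_n} => [ffun k => k \in S])) /=.
  apply: eq_bigr => S _; rewrite [RHS]big_mkcond /=.
  by apply: eq_bigr => k _; rewrite ffunE.
exists (fun f : {ffun 'I_n -> bool} => [set k | f k]) => [S _|f _].
  by apply/setP => k; rewrite inE ffunE.
by apply/ffunP => k; rewrite ffunE inE.
Qed.

Definition wL (a M p : nat) (l : {ffun 'I_a -> 'I_M}) : rat :=
  if [forall k, inPp p (l k)] && chain_ok p M (\sum_k (l k : nat))%N
  then (\prod_k ((l k : nat)%:R : rat))^-1 else 0.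
Arguments wL {a M} p l.

Lemma expr_sum_nat (x : rat) I (r : seq I) (P : pred I) (f : I -> nat) :
  x ^+ (\sum_(i <- r | P i) f i)%N = \prod_(i <- r | P i) x ^+ f i.
Proof. by rewrite (big_morph (fun n => x ^+ n) (exprD x) (expr0 x)). Qed.

Lemma Fsum_nil a b M p : Fsum a b [::] M p =
  \sum_(l : {ffun 'I_a -> 'I_M}) wL p l * \prod_(k < a | (k < b)%N) (-1) ^+ (l k : nat).
Proof.
rewrite /Fsum /=.
rewrite (eq_bigr (fun _ => \sum_(l : {ffun 'I_a -> 'I_M}) wL p l * \prod_(k < a | (k < b)%N) (-1) ^+ (l k : nat))).
  by rewrite sumr_const card_ffun !card_ord expn0 mulr1n.
move=> i _; apply: eq_bigr => l _.
rewrite !big_ord0 enum_ord0 /= andbT /wL expr_sum_nat.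
by case: ifP => _; rewrite ?mul0r // !mul1r mulrC.
Qed.

Definition GS a M p (S : {set 'I_a}) : rat :=
  \sum_(l : {ffun 'I_a -> 'I_M}) wL p l * \prod_(k in S) (-1) ^+ (l k : nat).
Arguments GS {a} M p S.

Lemma wL_perm a M p (s : {perm 'I_a}) (l : {ffun 'I_a -> 'I_M}) :
  wL p [ffun k => l (s k)] = wL p l.
Proof.
rewrite /wL.
have E1 : [forall k, inPp p ([ffun k => l (s k)] k)] = [forall k, inPp p (l k)].
  rewrite -(forall_perm s (fun k => inPp p (l k))); apply: eq_forallb => k; by rewrite ffunE.
have E2 : (\sum_k ([ffun k => l (s k)] k : nat) = \sum_k (l k : nat))%N.
  rewrite -(sum_perm_nat s); apply: eq_bigr => k _; by rewrite ffunE.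
have E3 : \prod_k (([ffun k => l (s k)] k : nat)%:R : rat) = \prod_k ((l k : nat)%:R).
  rewrite -(prod_perm_rat s); apply: eq_bigr => k _; by rewrite ffunE.
by rewrite E1 E2 E3.
Qed.

Lemma GS_card a M p (S : {set 'I_a}) :
  GS M p S = GS M p [set k : 'I_a | (k < #|S|)%N].
Proof.
have [s Hs] := exists_perm_set S.
rewrite /GS (sum_ffun_perm (s^-1)%g); apply: eq_bigr => l _.
rewrite wL_perm; congr (_ * _).
rewrite (reindex_inj (@perm_inj _ s)) /=; apply: eq_big => j.
  by rewrite Hs inE.
by rewrite ffunE permK.
Qed.

Lemma cardS_lt a (S : {set 'I_a}) : (#|S| < a.+1)%N.
Proof. by rewrite ltnS; apply: leq_trans (max_card _) _; rewrite card_ord. Qed.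

Lemma LHS_eq a M p :
  \sum_(b < a.+1) ('C(a, b)%:R : rat) * Fsum a b [::] M p =
  \sum_(l : {ffun 'I_a -> 'I_M}) wL p l * \prod_k (1 + (-1) ^+ (l k : nat)).
Proof.
transitivity (\sum_(S : {set 'I_a}) GS M p S); last first.
  rewrite /GS exchange_big /=; apply: eq_bigr => l _.
  by rewrite prod_1D big_distrr.
rewrite (partition_big (fun S => Ordinal (cardS_lt S)) xpredT) //=.
apply: eq_bigr => b _.
rewrite (eq_bigr (fun _ => GS M p [set k : 'I_a | (k < b)%N])); last first.
  by move=> S /eqP <-; rewrite GS_card.
rewrite sumr_const.
have -> : #|(fun S : {set 'I_a} => Ordinal (cardS_lt S) == b)| = 'C(a, b).
  rewrite -[X in 'C(X, _)](card_ord a) -card_draws -cardsE; apply: eq_card => S.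
  by rewrite !inE.
rewrite Fsum_nil /GS mulr_natl; congr (_ *+ _); apply: eq_bigr => l _.
by congr (_ * _); apply: eq_bigl => k; rewrite inE.
Qed.

Lemma prod_ffun_perm n M (s : {perm 'I_n}) (m : {ffun 'I_n -> 'I_M}) :
  \prod_k (([ffun k => m (s k)] k : nat)%:R : rat) = \prod_k ((m k : nat)%:R).
Proof. rewrite -(prod_perm_rat s); apply: eq_bigr => k _; by rewrite ffunE. Qed.

Lemma sum_ffun_perm_nat n M (s : {perm 'I_n}) (m : {ffun 'I_n -> 'I_M}) :
  (\sum_k ([ffun k => m (s k)] k : nat) = \sum_k (m k : nat))%N.
Proof. rewrite -(sum_perm_nat s); apply: eq_bigr => k _; by rewrite ffunE. Qed.

Lemma forall_ffun_perm n M (s : {perm 'I_n}) (m : {ffun 'I_n -> 'I_M}) (P : pred nat) :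
  [forall k, P ([ffun k => m (s k)] k)] = [forall k, P (m k)].
Proof. rewrite -(forall_perm s (fun k => P (m k))); apply: eq_forallb => k; by rewrite ffunE. Qed.

Definition cZ n N p (m : {ffun 'I_n -> 'I_N.+1}) : bool :=
  [forall k, inPp p (m k)] && ((\sum_k (m k : nat))%N == N).

Definition SZ a N p : rat :=
  \sum_(m : {ffun 'I_a.+1 -> 'I_N.+1})
    if cZ p m then (m ord_max : nat)%:R * (\prod_k ((m k : nat)%:R : rat))^-1 else 0.

Lemma Z_eq a N p : N%:R * Zsum a.+1 N p = a.+1%:R * SZ a N p.
Proof.
rewrite /Zsum big_distrr /=.
transitivity (\sum_(m : {ffun 'I_a.+1 -> 'I_N.+1}) \sum_(j < a.+1)
   if cZ p m then (m j : nat)%:R * (\prod_k ((m k : nat)%:R : rat))^-1 else 0).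
  apply: eq_bigr => m _; rewrite /cZ.
  case: ifP => [/andP [_ /eqP Hs]|_]; last by rewrite big1 // mulr0.
  by rewrite -big_distrl /= -natr_sum Hs.
rewrite exchange_big /= (eq_bigr (fun _ => SZ a N p)).
  by rewrite sumr_const card_ord mulr_natl.
move=> j _; rewrite /SZ (sum_ffun_perm (tperm j ord_max)).
apply: eq_bigr => m _.
rewrite /cZ forall_ffun_perm sum_ffun_perm_nat prod_ffun_perm ffunE tpermL //.
Qed.

Lemma dbl_lt N (i : 'I_N) : (2 * i < 2 * N)%N.
Proof. by rewrite ltn_pmul2l. Qed.
Definition dbl N (i : 'I_N) : 'I_(2 * N) := Ordinal (dbl_lt i).
Definition hD a N (m : {ffun 'I_a -> 'I_N}) : {ffun 'I_a -> 'I_(2 * N)} :=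
  [ffun k => dbl (m k)].

Lemma half_lt N (i : 'I_(2 * N)) : (i./2 < N)%N.
Proof.
have H := halfK i; rewrite -addnn in H.
have := ltn_ord i; have := leq_b1 (odd i); lia.
Qed.

Lemma L_restrict a N p :
  \sum_(l : {ffun 'I_a -> 'I_(2 * N)}) wL p l * \prod_k (1 + (-1) ^+ (l k : nat))
  = \sum_(m : {ffun 'I_a -> 'I_N}) wL p (hD m) * \prod_k (1 + (-1) ^+ (hD m k : nat)).
Proof.
rewrite (bigID (mem (@hD a N @: setT))) /= [X in _ + X]big1 ?addr0.
  rewrite big_imset /=; first by apply: eq_bigl => m; rewrite inE.
  move=> m1 m2 _ _ /ffunP H; apply/ffunP => k.
  have := H k; rewrite !ffunE => /(congr1 val) /= /eqP.
  by rewrite eqn_pmul2l // => /eqP /val_inj.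
move=> l Hl.
case: (boolP [forall k, ~~ odd (l k)]) => [/forallP Ho | /forallPn [k Hk]].
  exfalso; apply: (negP Hl); apply/imsetP.
  exists [ffun k => Ordinal (half_lt (l k))]; first by rewrite inE.
  apply/ffunP => k; apply: val_inj; rewrite /= !ffunE /=.
  have := Ho k; move: (nat_of_ord (l k)) => x Hx.
  by rewrite mul2n halfK (negbTE Hx) subn0.
rewrite (bigD1 k) //= -signr_odd (negbNE Hk) expr1 subrr mul0r mulr0 //.
Qed.

Lemma lift_widen a (j : 'I_a) : lift ord_max j = widen_ord (leqnSn a) j.
Proof. by apply: val_inj; exact: lift_max. Qed.

Lemma sum_recr_lift a (f : 'I_a.+1 -> nat) :
  (\sum_(k < a.+1) f k = \sum_(k < a) f (lift ord_max k) + f ord_max)%N.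
Proof. by rewrite big_ord_recr; congr (_ + _); apply: eq_bigr => k _; rewrite lift_widen. Qed.

Lemma prod_recr_lift a (f : 'I_a.+1 -> rat) :
  \prod_(k < a.+1) f k = \prod_(k < a) f (lift ord_max k) * f ord_max.
Proof. by rewrite big_ord_recr; congr (_ * _); apply: eq_bigr => k _; rewrite lift_widen. Qed.

Definition hZ a N (m : {ffun 'I_a -> 'I_N}) : {ffun 'I_a.+1 -> 'I_N.+1} :=
  [ffun k => if unlift ord_max k is Some j then widen_ord (leqnSn N) (m j)
             else inord (N - \sum_j (m j : nat))].

Lemma hZ_lift a N (m : {ffun 'I_a -> 'I_N}) j : (hZ m (lift ord_max j) : nat) = m j.
Proof. by rewrite ffunE liftK. Qed.

Lemma hZ_max a N (m : {ffun 'I_a -> 'I_N}) :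
  (hZ m ord_max : nat) = (N - \sum_j (m j : nat))%N.
Proof. by rewrite ffunE unlift_none inordK // ltnS leq_subr. Qed.

Definition G2 a N p (mm : {ffun 'I_a.+1 -> 'I_N.+1}) : rat :=
  if cZ p mm then (mm ord_max : nat)%:R * (\prod_k ((mm k : nat)%:R : rat))^-1 else 0.

Lemma SZ_restrict a N p : SZ a N p = \sum_(m : {ffun 'I_a -> 'I_N}) G2 p (hZ m).
Proof.
rewrite /SZ (bigID (mem (@hZ a N @: setT))) /= [X in _ + X]big1 ?addr0.
  rewrite big_imset /=; first by apply: eq_bigl => m; rewrite inE.
  move=> m1 m2 _ _ /ffunP H; apply/ffunP => k; apply: val_inj.
  by have := hZ_lift m1 k; rewrite H hZ_lift.
move=> mm Hmm; case: ifP => // /andP [/forallP Hp /eqP Hs].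
exfalso; apply: (negP Hmm); apply/imsetP.
have H0 : (0 < mm ord_max)%N by have := Hp ord_max; case/andP.
have Hlt : forall j : 'I_a, (mm (lift ord_max j) < N)%N.
  move=> j; move: Hs; rewrite sum_recr_lift (bigD1 j) //=; lia.
exists [ffun j => Ordinal (Hlt j)]; first by rewrite inE.
apply/ffunP => k; apply: val_inj.
case: (unliftP ord_max k) => [j ->|->].
  by apply/esym; rewrite /= hZ_lift ffunE.
apply/esym; rewrite /= hZ_max; move: Hs; rewrite sum_recr_lift.
rewrite (eq_bigr (fun j => nat_of_ord (mm (lift ord_max j))) (P := xpredT) (r := index_enum _) (F1 := fun j => nat_of_ord ([ffun j => Ordinal (Hlt j)] j))); last first.
  by move=> j _; rewrite ffunE.
set S1 := (X in (N - X)%N = _); set S2 := (X in (X + _)%N = N -> _).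
have -> : S2 = S1 by []. clearbody S1; lia.
Qed.

Lemma inPp2 p x : prime p -> odd p -> inPp p (2 * x) = inPp p x.
Proof.
move=> pp op; rewrite /inPp muln_gt0 /= Gauss_dvdr // coprimen2 //.
Qed.

Lemma pointwise a N p (m : {ffun 'I_a -> 'I_N}) : prime p -> odd p ->
  wL p (hD m) * \prod_k (1 + (-1) ^+ (hD m k : nat)) = G2 p (hZ m).
Proof.
move=> pp op.
set K := (\sum_j (m j : nat))%N.
set P := \prod_k ((m k : nat)%:R : rat).
have Hsum : (\sum_k (hD m k : nat))%N = (2 * K)%N.
  rewrite /K big_distrr /=; apply: eq_bigr => k _; by rewrite ffunE.
have Hf1 : [forall k, inPp p (hD m k)] = [forall k, inPp p (m k)].
  apply: eq_forallb => k; by rewrite ffunE /= inPp2.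
have Hprod1 : \prod_k (1 + (-1) ^+ (hD m k : nat)) = (2%:R : rat) ^+ a.
  rewrite (eq_bigr (fun _ => 2%:R)) ?prodr_const ?card_ord // => k _.
  by rewrite ffunE /= -signr_odd oddM /= expr0.
have Hprod2 : \prod_k ((hD m k : nat)%:R : rat) = 2%:R ^+ a * P.
  rewrite /P -[X in _ ^+ X](card_ord a) -prodr_const -big_split /=.
  by apply: eq_bigr => k _; rewrite ffunE /= natrM.
have Hf2 : [forall k, inPp p (hZ m k)] = [forall j, inPp p (m j)] && inPp p (N - K).
  apply/forallP/andP => [H|[/forallP H1 H2] k].
    split; last by have := H ord_max; rewrite hZ_max.
    by apply/forallP => j; have := H (lift ord_max j); rewrite hZ_lift.
  by case: (unliftP ord_max k) => [j ->|->]; rewrite ?hZ_lift ?hZ_max.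
have Hs2 : (\sum_k (hZ m k : nat))%N = (K + (N - K))%N.
  rewrite sum_recr_lift hZ_max; congr (_ + _); apply: eq_bigr => j _; exact: hZ_lift.
have Hp2 : \prod_k ((hZ m k : nat)%:R : rat) = P * (N - K)%:R.
  rewrite prod_recr_lift hZ_max; congr (_ * _); apply: eq_bigr => j _; by rewrite hZ_lift.
rewrite /wL /G2 /cZ Hsum Hf1 Hf2 Hs2 Hp2 Hprod1 Hprod2 hZ_max /chain_ok -/K -mulnBr inPp2 //.
case: (boolP (inPp p (N - K))) => HNK; last by rewrite !andbF /= mul0r.
have HK : (K < N)%N by move: HNK; rewrite /inPp => /andP [? _]; lia.
rewrite (ltn_pmul2l (isT : (0 < 2)%N)) HK (subnKC (ltnW HK)) eqxx !andbT.
case: ifP => _; last by rewrite mul0r.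
have H2 : (2%:R : rat) ^+ a != 0 by rewrite expf_neq0 // pnatr_eq0.
have HNK0 : ((N - K)%:R : rat) != 0 by rewrite pnatr_eq0 -lt0n; lia.
by rewrite !invfM mulrAC (mulVf H2) mul1r mulrCA (mulfV HNK0) mulr1.
Qed.

Unset Implicit Arguments.

Theorem corollary3p3 (p a N : nat) (hp : prime p) (hodd : odd p)
  (ha : (1 <= a)%N) (hN : (0 < N)%N) (hpN : (p %| N)%N) :
  \sum_(b < a.+1) ('C(a, b)%:R : rat) * Fsum a b [::] (2 * N) p
  = (N%:R / (a.+1)%:R) * Zsum a.+1 N p.
Proof.
rewrite LHS_eq L_restrict.
rewrite (eq_bigr (fun m => G2 p (hZ m))); last by move=> m _; exact: pointwise.
rewrite -SZ_restrict mulrAC Z_eq mulrAC mulfV ?mul1r //.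
by rewrite pnatr_eq0.
Qed.
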